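(* For a non-negative integer $m$, let $k^*_m$ denote the minimum $k \ge 0$ such that there exist non-negative integers $x_1,\dots,x_k,y_1,\dots,y_k$ with $\sum_{i=1}^k 2^{x_i}3^{y_i} = m$ (so $k^*_0 = 0$). For a positive integer $n$ let $$\mathcal{A}^*(n) := \frac{1}{2^n}\sum_{m=0}^{2^n-1} k^*_m .$$ Then $\mathcal{A}^*(n) \in \Omega(n/\lg n)$ as $n \to \infty$.
   Context: A representation of a non-negative integer $m$ in the double-base number system is a tuple $[k, \langle x_i\rangle_{i=1}^k, \langle y_i\rangle_{i=1}^k]$ of non-negative integers with $\sum_{i=1}^k 2^{x_i}3^{y_i}=m$; $k$ is its number of terms, and $k^*_m$ is the number of terms of a representation of $m$ with the fewest terms. $\lg$ denotes the base-2 logarithm. *)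

(* Defs.v *)
From mathcomp Require Import all_boot.
From Stdlib Require Import Reals ClassicalEpsilon.

(* A double-base representation of m: a list of exponent pairs (x_i, y_i)
   with sum_i 2^x_i * 3^y_i = m; its number of terms is the list length. *)
Definition dbns_value (s : seq (nat * nat)) : nat :=
  \sum_(p <- s) (2 ^ p.1 * 3 ^ p.2).

Definition has_rep (m k : nat) : Prop :=
  exists s : seq (nat * nat), size s = k /\ dbns_value s = m.

Lemma has_rep_ex (m : nat) : exists k, has_rep m k.
Proof.
  exists m; exists (nseq m (0,0)); split; first by rewrite size_nseq.
  rewrite /dbns_value; elim: m => [|m IH]; first by rewrite big_nil.
  by rewrite /= big_cons IH /= add1n.
Qed.

Definition has_repb (m k : nat) : bool :=
  if excluded_middle_informative (has_rep m k) then true else false.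

Lemma has_repbP m k : has_repb m k <-> has_rep m k.
Proof. by rewrite /has_repb; case: excluded_middle_informative. Qed.

Lemma has_repb_ex (m : nat) : exists k, has_repb m k.
Proof. by case: (has_rep_ex m) => k Hk; exists k; apply/has_repbP. Qed.

Definition kstar (m : nat) : nat := ex_minn (has_repb_ex m).

Definition Astar (n : nat) : R :=
  (INR (\sum_(0 <= m < 2 ^ n) kstar m) / (2 ^ n))%R.

(* Main.v *)
Require Import Defs.
From mathcomp Require Import all_boot zify.

Fixpoint allseq (A : seq nat) k : seq (seq nat) :=
  if k is k'.+1 then [seq a :: s | a <- A, s <- allseq A k'] else [:: [::]].

Lemma size_allseq A k : size (allseq A k) = size A ^ k.
Proof. by elim: k => [|k IH] //=; rewrite size_allpairs IH expnS. Qed.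

Lemma mem_allseq A s : all (mem A) s -> s \in allseq A (size s).
Proof.
elim: s => [|a s IH] //= /andP [Ha Hs].
exact: (allpairs_f (fun a s => a :: s) Ha (IH Hs)).
Qed.

Definition alph n := 0 :: [seq 2 ^ x * 3 ^ y | x <- iota 0 n, y <- iota 0 n].

Lemma size_alph n : size (alph n) = n * n + 1.
Proof. by rewrite /= size_allpairs size_iota addn1. Qed.

Lemma kstar_rep m : exists s, size s = kstar m /\ dbns_value s = m.
Proof.
rewrite /kstar; case: (ex_minnP (has_repb_ex m)) => k Hk _; exact/has_repbP.
Qed.

Lemma powE a b : PeanoNat.Nat.pow a b = a ^ b.
Proof. by elim: b => [|b IH] //=; rewrite expnS IH. Qed.

Lemma dbns_cons p s : dbns_value (p :: s) = 2 ^ p.1 * 3 ^ p.2 + dbns_value s.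
Proof. by rewrite /dbns_value big_cons !powE. Qed.

Lemma term_bound n s : dbns_value s < 2 ^ n ->
  all (mem (alph n)) [seq 2 ^ p.1 * 3 ^ p.2 | p <- s] /\
  sumn [seq 2 ^ p.1 * 3 ^ p.2 | p <- s] = dbns_value s.
Proof.
elim: s => [|[x y] s IH] /=; first by rewrite /dbns_value big_nil.
rewrite dbns_cons /= => H.
have [H1 H2] := IH (leq_ltn_trans (leq_addl _ _) H).
split; last by rewrite H2.
rewrite H1 andbT.
have Ht : 2 ^ x * 3 ^ y < 2 ^ n by apply: leq_ltn_trans H; apply: leq_addr.
have hx : x < n.
  rewrite -(ltn_exp2l _ _ (isT : 1 < 2)); apply: leq_ltn_trans Ht.
  by rewrite leq_pmulr // expn_gt0.
have hy : y < n.
  rewrite -(ltn_exp2l _ _ (isT : 1 < 2)); apply: leq_ltn_trans Ht.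
  apply: (@leq_trans (3 ^ y)); first by case: (y) => // y0; rewrite leq_exp2r.
  by rewrite leq_pmull // expn_gt0.
rewrite inE; apply/orP; right.
by apply: (allpairs_f (fun x y => 2 ^ x * 3 ^ y)); rewrite mem_iota add0n.
Qed.

Lemma exp_mono a b k : a <= b -> a ^ k <= b ^ k.
Proof. by move=> h; elim: k => [|k IH] //; rewrite !expnS leq_mul. Qed.

Lemma sumn_nseq0 k : sumn (nseq k 0) = 0.
Proof. by elim: k. Qed.

Lemma small_count n K :
  count (fun m => kstar m <= K) (iota 0 (2 ^ n)) <= (n * n + 1) ^ K.
Proof.
rewrite -size_filter.
have -> : (n * n + 1) ^ K = size (map sumn (allseq (alph n) K)).
  by rewrite size_map size_allseq size_alph.
apply: uniq_leq_size; first by rewrite filter_uniq // iota_uniq.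
move=> m; rewrite mem_filter mem_iota add0n => /andP [Hk Hm].
have [s [Hs Hv]] := kstar_rep m.
have [Ha Hsum] := @term_bound n s (ltac:(by rewrite Hv)).
set t := [seq 2 ^ p.1 * 3 ^ p.2 | p <- s] ++ nseq (K - size s) 0.
have Hsz : size t = K by rewrite size_cat size_map size_nseq; lia.
have Ht : t \in allseq (alph n) K.
  rewrite -Hsz; apply: mem_allseq; rewrite all_cat Ha /=.
  by apply/allP => x; rewrite mem_nseq => /andP [_ /eqP ->].
apply/mapP; exists t => //.
by rewrite sumn_cat Hsum Hv sumn_nseq0 addn0.
Qed.

Lemma sum_lb K s : (K + 1) * count (fun m => K < kstar m) s <= \sum_(m <- s) kstar m.
Proof.
elim: s => [|a s IH]; first by rewrite big_nil muln0.
rewrite big_cons /= mulnDr; apply: leq_add => //.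
by case: ltnP => h; rewrite ?muln0 // muln1 addn1.
Qed.

Lemma main_nat n : 2 <= n ->
  let L := trunc_log 2 n in let K := (n - 1) %/ (2 * L + 2) in
  [/\ 1 <= L, 2 ^ L <= n, n <= 4 * (K + 1) * L &
      (K + 1) * 2 ^ (n - 1) <= \sum_(0 <= m < 2 ^ n) kstar m].
Proof.
move=> hn L K.
have hL1 : 2 ^ L <= n by apply: trunc_logP; lia.
have hL2 : n < 2 ^ L.+1 by apply: trunc_log_ltn.
have hL : 1 <= L.
  case: (posnP L) => // h0; move: hL2; rewrite h0 expn1; lia.
have hc := @ltn_ceil (n - 1) (2 * L + 2) (ltac:(lia)).
rewrite -/K in hc.
have hdiv := leq_divM (n - 1) (2 * L + 2); rewrite -/K in hdiv.
split => //; first by nia.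
rewrite /index_iota subn0.
have Hc := count_predC (fun m => K < kstar m) (iota 0 (2 ^ n)).
have e : count (predC (fun m => K < kstar m)) (iota 0 (2 ^ n)) =
         count (fun m => kstar m <= K) (iota 0 (2 ^ n)).
  by apply: eq_count => m /=; rewrite -leqNgt.
rewrite e size_iota in Hc.
have Hs := small_count n K.
have Hb : (n * n + 1) ^ K <= 2 ^ (n - 1).
  apply: (@leq_trans ((2 ^ (2 * L + 2)) ^ K)).
    apply: exp_mono.
    have -> : 2 ^ (2 * L + 2) = 2 ^ L.+1 * 2 ^ L.+1 by rewrite -expnD; congr (_ ^ _); lia.
    nia.
  rewrite -expnM; apply: leq_pexp2l => //; lia.
have h2 : 2 ^ n = 2 * 2 ^ (n - 1) by rewrite -expnS; congr (_ ^ _); lia.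
apply: leq_trans (sum_lb K _).
apply: leq_mul => //; lia.
Qed.

From Stdlib Require Import Reals Lra.
Open Scope R_scope.

Lemma INR_expn a b : INR (expn a b) = INR a ^ b.
Proof. by rewrite -powE pow_INR. Qed.

Lemma INR_muln a b : INR (muln a b) = INR a * INR b.
Proof. by rewrite -mult_INR. Qed.

Theorem theorem1 :
  exists c : R, 0 < c /\ exists N : nat, forall n : nat, (N <= n)%nat ->
    c * (INR n / (ln (INR n) / ln 2)) <= Astar n.
Proof.
exists (1/8); split; first lra.
exists 2%nat => n hn.
have [hL hL2 hn4 hsum] := main_nat n hn.
set L := trunc_log 2 n in hL hL2 hn4 hsum.
set K := ((n - 1) %/ (2 * L + 2))%N in hn4 hsum.
set S := (\sum_(0 <= m < 2 ^ n) kstar m)%N in hsum.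
rewrite /Astar -/S.
have hL2R : 2 ^ L <= INR n.
  have := le_INR _ _ (elimT leP hL2); by rewrite INR_expn.
have hLR : 1 <= INR L by have := le_INR _ _ (elimT leP hL).
have ln2 : 0 < ln 2 by have := ln_lt_2; lra.
have hlnn : INR L * ln 2 <= ln (INR n).
  rewrite -ln_pow; last lra.
  have h2L : 0 < 2 ^ L by apply: pow_lt; lra.
  case: (Rle_lt_or_eq_dec _ _ hL2R) => h.
    by apply: Rlt_le; apply: ln_increasing.
  by rewrite h; apply: Rle_refl.
set l := ln (INR n) / ln 2.
have hl : INR L <= l.
  by rewrite /l; apply: (Rmult_le_reg_r (ln 2)) => //; field_simplify; lra.
have hn0 : 0 <= INR n by apply: pos_INR.
have H1 : INR n / l <= INR n / INR L.
  apply: Rmult_le_compat_l => //; apply: Rinv_le_contravar; lra.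
have eS : S = \sum_(0 <= m < expn 2 n) kstar m by rewrite /S powE.
have hS : INR (muln (addn K 1) (expn 2 (n - 1))) <= INR S.
  by rewrite eS; apply: le_INR; apply/leP.
rewrite INR_muln INR_expn plus_INR /= in hS.
have hn4R : INR n <= 4 * (INR K + 1) * INR L.
  have := le_INR _ _ (elimT leP hn4); rewrite !INR_muln plus_INR /=. lra.
have h2n : 2 ^ n = 2 * 2 ^ (n - 1).
  rewrite tech_pow_Rmult; congr (_ ^ _); lia.
set P := 2 ^ (n - 1) in hS h2n.
have hP : 0 < P by apply: pow_lt; lra.
have hK : 0 <= INR K by apply: pos_INR.
rewrite h2n.
have hA : (INR K + 1) / 2 <= INR S / (2 * P).
  apply: (Rmult_le_reg_r (2 * P)); first lra.
  field_simplify; lra.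
have hB : 1 / 8 * (INR n / INR L) <= (INR K + 1) / 2.
  apply: (Rmult_le_reg_r (8 * INR L)); first lra.
  field_simplify; lra.
lra.
Qed.
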